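(* Let $\epsilon\in(0,1)$, $K\ge3$, $C>K$, $\delta\in(0,1)$, and let $g:[0,1]\to[1,K]$ be non-decreasing. Let $f(\lambda)=\frac{C}{\lambda^2}+\frac{g(\lambda)}{\epsilon^2}$ and let $\lambda^*\in(0,1]$ be a minimizer of $f$. Suppose that evaluating $g$ at $\lambda$ costs $O(C\ln(K/\delta)/\lambda^2)$ samples. Then SolveOpt returns $\hat\lambda$ with $f(\hat\lambda)\le50f(\lambda^* )$ while using at most $O(f(\lambda^* )\ln(K/\delta)\ln(1/\epsilon))$ samples.
   Context: SolveOpt$(\epsilon,K,C,g)$: evaluate $g(1)$; set $U=1$, $L=\sqrt{\frac{C}{C+(g(1)-1)/\epsilon^2}}$, $\lambda=1$; while $\lambda\ge L$: evaluate $g(\lambda)$; if $f(\lambda)<f(U)$, set $U\leftarrow\lambda$ and $L\leftarrow\sqrt{\frac{C}{C/\lambda^2+(g(\lambda)-1)/\epsilon^2}}$; then set $\lambda\leftarrow\lambda/5$. Return $\hat\lambda=U$. *)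

(* Defs.v *)
From Stdlib Require Import Reals.
Open Scope R_scope.

Definition fobj (eps C : R) (g : R -> R) (l : R) : R :=
  C / l ^ 2 + g l / eps ^ 2.

Definition sU (s : R * R * R) : R := fst (fst s).
Definition sL (s : R * R * R) : R := snd (fst s).
Definition slam (s : R * R * R) : R := snd s.

Definition solveopt_init (eps C : R) (g : R -> R) : R * R * R :=
  ((1, sqrt (C / (C + (g 1 - 1) / eps ^ 2))), 1).

Definition solveopt_step (eps C : R) (g : R -> R) (s : R * R * R) : R * R * R :=
  let U := sU s in let L := sL s in let lam := slam s in
  if Rlt_dec (fobj eps C g lam) (fobj eps C g U)
  then ((lam, sqrt (C / (C / lam ^ 2 + (g lam - 1) / eps ^ 2))), lam / 5)
  else ((U, L), lam / 5).

Definition solveopt_state (eps C : R) (g : R -> R) (k : nat) : R * R * R :=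
  Nat.iter k (solveopt_step eps C g) (solveopt_init eps C g).

(* The while loop runs exactly N times: the guard lambda >= L holds at the
   states 0..N-1 and fails at state N.  The output is then sU (state N). *)
Definition solveopt_halts_at (eps C : R) (g : R -> R) (N : nat) : Prop :=
  (forall k : nat, (k < N)%nat ->
     slam (solveopt_state eps C g k) >= sL (solveopt_state eps C g k)) /\
  slam (solveopt_state eps C g N) < sL (solveopt_state eps C g N).

Fixpoint sum_upto (h : nat -> R) (n : nat) : R :=
  match n with
  | O => 0
  | S m => sum_upto h m + h m
  end.

(* Total number of samples used when the loop runs N times: one evaluation
   of g(1) at initialisation plus one evaluation of g(lambda_k) in each
   iteration k < N; cost l is the sample cost of evaluating g at l. *)
Definition solveopt_samples (eps C : R) (g : R -> R) (cost : R -> R) (N : nat) : R :=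
  cost 1 + sum_upto (fun k => cost (slam (solveopt_state eps C g k))) N.

(* Main.v *)
Require Import Defs.
From Stdlib Require Import Reals Lra Lia Psatz Classical.
Open Scope R_scope.

Definition Dfun (eps C : R) (g : R -> R) (u : R) : R := C / u ^ 2 + (g u - 1) / eps ^ 2.

Lemma D_eq eps C g u : eps <> 0 -> Dfun eps C g u = fobj eps C g u - / eps ^ 2.
Proof. intros. unfold Dfun, fobj, Rdiv. ring. Qed.

Lemma state_S eps C g k : solveopt_state eps C g (S k) = solveopt_step eps C g (solveopt_state eps C g k).
Proof. reflexivity. Qed.

Lemma slam_state eps C g k : slam (solveopt_state eps C g k) = / 5 ^ k.
Proof.
  induction k.
  - simpl. unfold slam; simpl. lra.
  - rewrite state_S. unfold solveopt_step. destruct Rlt_dec; unfold slam at 1; simpl;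
    fold (slam (solveopt_state eps C g k)); rewrite IHk; field; apply pow_nonzero; lra.
Qed.

Lemma inv5_bounds k : 0 < / 5 ^ k <= 1.
Proof.
  split. apply Rinv_0_lt_compat, pow_lt; lra.
  rewrite <- Rinv_1. apply Rinv_le_contravar; [lra|]. apply pow_R1_Rle; lra.
Qed.

Lemma step_props eps C g s :
  fobj eps C g (sU (solveopt_step eps C g s)) <= fobj eps C g (sU s) /\
  fobj eps C g (sU (solveopt_step eps C g s)) <= fobj eps C g (slam s) /\
  ((sU (solveopt_step eps C g s) = slam s /\
    sL (solveopt_step eps C g s) = sqrt (C / Dfun eps C g (slam s))) \/
   (sU (solveopt_step eps C g s) = sU s /\ sL (solveopt_step eps C g s) = sL s)).
Proof.
  unfold solveopt_step. destruct Rlt_dec as [H|H]; unfold sU, sL, slam in *; simpl.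
  - split; [lra|split;[lra|]]. left. split; reflexivity.
  - split; [lra|split;[lra|]]. right. split; reflexivity.
Qed.

Lemma invariant eps C g k :
  0 < sU (solveopt_state eps C g k) <= 1 /\
  sL (solveopt_state eps C g k) = sqrt (C / Dfun eps C g (sU (solveopt_state eps C g k))).
Proof.
  induction k.
  - simpl. unfold sU, sL; simpl. split; [lra|]. unfold Dfun. f_equal. f_equal. f_equal. field.
  - rewrite state_S. destruct (step_props eps C g (solveopt_state eps C g k)) as [_ [_ [[H1 H2]|[H1 H2]]]];
    rewrite H1, H2.
    + rewrite slam_state. split; [apply inv5_bounds|reflexivity].
    + exact IHk.
Qed.

Lemma first_nat (P : nat -> Prop) : (exists n, P n) -> exists N, P N /\ forall k, (k < N)%nat -> ~ P k.
Proof.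
  intros [n Hn]. revert Hn. induction n as [n IH] using (well_founded_induction Wf_nat.lt_wf). intro Hn.
  destruct (classic (exists k, (k < n)%nat /\ P k)) as [[k [Hk Pk]]|Hno].
  - exact (IH k Hk Pk).
  - exists n; split; auto. intros k Hk Pk; apply Hno; eauto.
Qed.

Lemma lt_div_swap a b c : 0<a -> 0<b -> a < c/b -> b < c/a.
Proof. intros Ha Hb H. apply Rmult_lt_compat_r with (r:=b) in H; [|lra].
  replace (c/b*b) with c in H by (field; lra).
  apply Rmult_lt_compat_r with (r:=/a) in H; [|apply Rinv_0_lt_compat; lra].
  replace (a*b*/a) with b in H by (field; lra). exact H. Qed.

Lemma le_div_swap a b c : 0<a -> 0<b -> c/b <= a -> c/a <= b.
Proof. intros Ha Hb H. apply Rmult_le_compat_r with (r:=b) in H; [|lra].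
  replace (c/b*b) with c in H by (field; lra).
  apply Rmult_le_compat_r with (r:=/a) in H; [|left; apply Rinv_0_lt_compat; lra].
  replace (a*b*/a) with b in H by (field; lra). exact H. Qed.

Lemma lt_sqrt_sq l x : 0 <= l -> 0 <= x -> l < sqrt x -> l ^ 2 < x.
Proof. intros. rewrite <- (sqrt_sqrt x H0). pose proof (sqrt_pos x). nra. Qed.

Lemma sqrt_le_sq l x : 0 <= x -> sqrt x <= l -> x <= l ^ 2.
Proof. intros. rewrite <- (sqrt_sqrt x H). pose proof (sqrt_pos x). nra. Qed.

Lemma inv_sq_le C a b : 0 <= C -> 0<a -> 0<b -> b <= 5*a -> C / a^2 <= 25 * C / b^2.
Proof. intros HC Ha Hb H. unfold Rdiv.
  replace (25 * C * / b^2) with (C * / (b^2/25)) by (field; lra).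
  apply Rmult_le_compat_l; auto. apply Rinv_le_contravar; nra. Qed.

Lemma div_le_1 a b : 0 < b -> a <= b -> a / b <= 1.
Proof. intros. apply (Rmult_le_reg_r b); auto. unfold Rdiv; rewrite Rmult_assoc, Rinv_l; lra. Qed.

Lemma sum_mono (h h' : nat -> R) n : (forall k, (k < n)%nat -> h k <= h' k) -> sum_upto h n <= sum_upto h' n.
Proof. induction n; simpl; intros H. lra. assert (h n <= h' n) by (apply H; lia).
  assert (sum_upto h n <= sum_upto h' n) by (apply IHn; intros; apply H; lia). lra. Qed.

Lemma sum_geom A n : 0 <= A -> sum_upto (fun k => A * 25 ^ k) n * 24 <= A * 25 ^ n.
Proof. intros HA. induction n; simpl. lra. nra. Qed.

Theorem theoremB3 :
  forall c : R, 0 < c ->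
  exists c' : R, 0 < c' /\
  forall (eps K C delta : R) (g : R -> R) (lstar : R) (cost : R -> R),
    0 < eps < 1 -> 3 <= K -> K < C -> 0 < delta < 1 ->
    (forall x, 0 <= x <= 1 -> 1 <= g x <= K) ->
    (forall x y, 0 <= x -> x <= y -> y <= 1 -> g x <= g y) ->
    0 < lstar <= 1 ->
    (forall l, 0 < l <= 1 -> fobj eps C g lstar <= fobj eps C g l) ->
    (forall l, 0 < l <= 1 -> cost l <= c * C * ln (K / delta) / l ^ 2) ->
    exists N : nat,
      solveopt_halts_at eps C g N /\
      fobj eps C g (sU (solveopt_state eps C g N)) <= 50 * fobj eps C g lstar /\
      solveopt_samples eps C g cost N
        <= c' * fobj eps C g lstar * ln (K / delta) * (1 + ln (1 / eps)).
Proof.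
  intros c Hc. exists (28 * c). split; [lra|].
  intros eps K C delta g lstar cost Heps HK HKC Hdelta Hg Hmono Hls Hmin Hcost.
  assert (HC : 0 < C) by lra.
  assert (Hie : 0 < / eps ^ 2) by (apply Rinv_0_lt_compat; nra).
  assert (Hepsn : eps <> 0) by lra.
  set (F := fobj eps C g lstar).
  set (st := solveopt_state eps C g).
  assert (HDpos : forall u, 0 < u <= 1 -> 0 < Dfun eps C g u).
  { intros u Hu. unfold Dfun. specialize (Hg u ltac:(lra)).
    assert (0 < C / u ^ 2) by (apply Rdiv_lt_0_compat; [lra | apply pow_lt; lra]).
    assert (0 <= (g u - 1) / eps ^ 2) by (unfold Rdiv; apply Rmult_le_pos; lra). lra. }
  assert (HFC : C / lstar ^ 2 + / eps ^ 2 <= F).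
  { unfold F, fobj. specialize (Hg lstar ltac:(lra)).
    assert (/ eps ^ 2 <= g lstar / eps ^ 2) by (unfold Rdiv; nra). lra. }
  assert (HCl : C <= C / lstar ^ 2).
  { unfold Rdiv. assert (1 <= / lstar ^ 2).
    { rewrite <- Rinv_1. apply Rinv_le_contravar; [apply pow_lt; lra|]. simpl. nra. }
    nra. }
  assert (Hinv : forall k, 0 < sU (st k) <= 1 /\ sL (st k) = sqrt (C / Dfun eps C g (sU (st k))))
    by (intro; apply invariant).
  assert (Hlam : forall k, slam (st k) = / 5 ^ k) by (intro; apply slam_state).
  assert (Hlb : forall k, 0 < slam (st k) <= 1) by (intro; rewrite Hlam; apply inv5_bounds).
  assert (Hstep : forall k, fobj eps C g (sU (st (S k))) <= fobj eps C g (sU (st k)) /\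
                            fobj eps C g (sU (st (S k))) <= fobj eps C g (slam (st k))).
  { intro k. unfold st. rewrite state_S. pose proof (step_props eps C g (solveopt_state eps C g k)). tauto. }
  assert (HP : forall k, fobj eps C g (sU (st k)) <= 25 * F \/ lstar <= 5 * slam (st k)).
  { induction k.
    - right. rewrite Hlam. simpl. lra.
    - destruct (Hstep k) as [S1 S2]. destruct IHk as [IH|IH]; [left; lra|].
      destruct (Rle_lt_dec lstar (5 * slam (st (S k)))) as [Hle|Hlt]; [right; exact Hle|].
      left. assert (E : slam (st (S k)) = slam (st k) / 5) by (rewrite !Hlam; simpl; field; apply pow_nonzero; lra).
      rewrite E in Hlt. pose proof (Hlb k) as Hl.
      assert (fobj eps C g (slam (st k)) <= 25 * F).
      { unfold fobj. pose proof (inv_sq_le C (slam (st k)) lstar ltac:(lra) ltac:(lra) ltac:(lra) IH).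
        pose proof (Hmono (slam (st k)) lstar ltac:(lra) ltac:(lra) ltac:(lra)).
        assert (g (slam (st k)) / eps ^ 2 <= g lstar / eps ^ 2) by (unfold Rdiv; nra).
        unfold F, fobj in *. specialize (Hg lstar ltac:(lra)).
        assert (0 <= g lstar / eps ^ 2) by (unfold Rdiv; nra).
        unfold Rdiv in *. nra. }
      lra. }
  assert (HL0 : 0 < sL (st O)).
  { rewrite (proj2 (Hinv O)). apply sqrt_lt_R0. apply Rdiv_lt_0_compat; auto. apply HDpos, Hinv. }
  assert (Hfdec : forall k, fobj eps C g (sU (st k)) <= fobj eps C g (sU (st O))).
  { induction k; [lra|]. pose proof (Hstep k). lra. }
  assert (HLlb : forall k, sL (st O) <= sL (st k)).
  { intro k. rewrite (proj2 (Hinv O)), (proj2 (Hinv k)). apply sqrt_le_1_alt.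
    pose proof (HDpos _ (proj1 (Hinv k))). pose proof (HDpos _ (proj1 (Hinv O))).
    rewrite !D_eq in * by auto. pose proof (Hfdec k).
    unfold Rdiv. apply Rmult_le_compat_l; [lra|]. apply Rinv_le_contravar; lra. }
  assert (Hex : exists n, slam (st n) < sL (st n)).
  { destruct (pow_lt_1_zero (/5) ltac:(rewrite Rabs_right; lra) _ HL0) as [n Hn].
    exists n. specialize (Hn n (le_n n)). rewrite Rabs_right in Hn.
    2: { left. apply pow_lt; lra. }
    rewrite pow_inv, <- Hlam in Hn. pose proof (HLlb n). lra. }
  destruct (first_nat _ Hex) as [N [HN Hbefore]].
  assert (Hguard : forall k, (k < N)%nat -> slam (st k) >= sL (st k)).
  { intros k Hk. apply Rnot_lt_ge. apply Hbefore; auto. }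
  destruct N as [|M].
  { exfalso. rewrite Hlam in HN. rewrite (proj2 (Hinv O)) in HN.
    assert (sqrt (C / Dfun eps C g (sU (st O))) <= 1).
    { rewrite <- sqrt_1. apply sqrt_le_1_alt. apply div_le_1. apply HDpos, Hinv.
      unfold st; simpl. unfold sU; simpl. unfold Dfun. idtac.
      specialize (Hg 1 ltac:(lra)). assert (0 <= (g 1 - 1) / eps ^ 2) by (unfold Rdiv; nra).
      replace (C / 1 ^ 2) with C by field. lra. }
    rewrite pow_O, Rinv_1 in HN. lra. }
  exists (S M). split; [split; [exact Hguard | exact HN]|].
  fold st. fold F.
  split.
  -
    destruct (HP (S M)) as [H|H]; [lra|].
    set (U := sU (st (S M))) in *. set (l := slam (st (S M))) in *.
    destruct (Hinv (S M)) as [HU HLe]. fold U in HU, HLe. rewrite HLe in HN.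
    pose proof (Hlb (S M)) as Hl. fold l in Hl.
    pose proof (HDpos U HU) as HD.
    assert (Hdiv : 0 <= C / Dfun eps C g U) by (apply Rlt_le, Rdiv_lt_0_compat; lra).
    pose proof (lt_sqrt_sq l _ ltac:(lra) Hdiv HN) as H1.
    pose proof (lt_div_swap (l^2) _ C ltac:(apply pow_lt; lra) HD H1) as H2.
    pose proof (inv_sq_le C l lstar ltac:(lra) ltac:(lra) ltac:(lra) H) as H3.
    rewrite D_eq in H2 by auto.
    replace (25 * C / lstar ^ 2) with (25 * (C / lstar ^ 2)) in H3 by (unfold Rdiv; ring).
    lra.
  - unfold solveopt_samples. fold st.
    assert (Hln : 0 < ln (K / delta)).
    { rewrite <- ln_1. apply ln_increasing; [lra|]. apply (Rmult_lt_reg_r delta); [lra|].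
      unfold Rdiv; rewrite Rmult_assoc, Rinv_l; lra. }
    assert (Hle : 0 <= ln (1 / eps)).
    { rewrite <- ln_1. left. apply ln_increasing; [lra|]. apply (Rmult_lt_reg_r eps); [lra|].
      unfold Rdiv; rewrite Rmult_assoc, Rinv_l; lra. }
    assert (Hid : forall k, C / (slam (st k)) ^ 2 = C * 25 ^ k).
    { intro k. rewrite Hlam. replace 25 with (5*5) by lra. rewrite Rpow_mult_distr.
      field. apply pow_nonzero; lra. }
    assert (Hc1 : cost 1 <= c * ln (K / delta) * C).
    { pose proof (Hcost 1 ltac:(lra)). replace (c * C * ln (K / delta) / 1 ^ 2) with (c * ln (K / delta) * C) in H by field. exact H. }
    assert (Hs : sum_upto (fun k => cost (slam (st k))) (S M) <= sum_upto (fun k => (c * ln (K / delta) * C) * 25 ^ k) (S M)).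
    { apply sum_mono. intros k _. pose proof (Hcost _ (Hlb k)).
      replace (c * C * ln (K / delta) / slam (st k) ^ 2) with (c * ln (K / delta) * (C / slam (st k) ^ 2)) in H by (unfold Rdiv; ring).
      rewrite Hid in H. lra. }
    pose proof (sum_geom (c * ln (K / delta) * C) (S M) ltac:(apply Rmult_le_pos; nra)) as Hg2.
    assert (HX : C * 25 ^ M <= 25 * F).
    { rewrite <- Hid. pose proof (Hguard M ltac:(lia)) as HGM.
      destruct (Hinv M) as [HU HLe]. rewrite HLe in HGM. pose proof (Hlb M) as Hl.
      pose proof (HDpos _ HU) as HD.
      destruct (HP M) as [H|H].
      - assert (Hdiv : 0 <= C / Dfun eps C g (sU (st M))) by (apply Rlt_le, Rdiv_lt_0_compat; lra).
        pose proof (sqrt_le_sq (slam (st M)) _ Hdiv ltac:(lra)) as H1.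
        pose proof (le_div_swap (slam (st M) ^ 2) _ C ltac:(apply pow_lt; lra) HD H1) as H2.
        rewrite D_eq in H2 by auto. lra.
      - pose proof (inv_sq_le C (slam (st M)) lstar ltac:(lra) ltac:(lra) ltac:(lra) H) as H3.
        replace (25 * C / lstar ^ 2) with (25 * (C / lstar ^ 2)) in H3 by (unfold Rdiv; ring).
        lra. }
    simpl pow in Hg2.
    assert (HP1 : 0 <= c * ln (K / delta) * (25 * F - C * 25 ^ M)) by (apply Rmult_le_pos; nra).
    assert (HP2 : 0 <= c * ln (K / delta) * (F - C)) by (apply Rmult_le_pos; nra).
    assert (HP3 : 0 <= c * ln (K / delta) * F * ln (1 / eps)) by (apply Rmult_le_pos; [|lra]; apply Rmult_le_pos; nra).
    nra.
Qed.
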